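(* Let $Z$ and $E$ be finite groups with $Z$ abelian and $E$ acting on $Z$ by automorphisms. Let $\mathcal I,\mathcal J$ be $Z\rtimes E$-sets, and let $\overline{\mathcal I},\overline{\mathcal J}$ be the $E$-sets of $Z$-orbits in $\mathcal I$ and $\mathcal J$. Let $\overline{\mathfrak J}:\overline{\mathcal I}\to\overline{\mathcal J}$ be an $E$-equivariant map. Assume: (i) for $\mathcal K\in\{\mathcal I,\mathcal J\}$ every $Z$-orbit in $\mathcal K$ contains an element $x$ with $(ZE)_x=Z_xE_x$; (ii) $Z_x=Z_y$ for every $x\in\mathcal I$ with $Z$-orbit $\overline x$ and every $y\in\overline{\mathfrak J}(\overline x)$; (iii) $\overline{\mathfrak J}$ is a bijection. Then $\overline{\mathfrak J}$ lifts to a $Z\rtimes E$-equivariant bijection $\mathfrak J:\mathcal I\to\mathcal J$ (i.e. $\mathfrak J(x)\in\overline{\mathfrak J}(Z.x)$ for all $x$).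
   Context: For a group acting on a set, $Z_x$, $E_x$, $(ZE)_x$ denote stabilizers of $x$ in $Z$, $E$, $Z\rtimes E$. *)

(* Defs.v *)
From mathcomp Require Import all_boot all_fingroup all_solvable.
Set Implicit Arguments. Unset Strict Implicit. Unset Printing Implicit Defensive.

Definition zorbits (gT : finGroupType) (D : {set gT}) (T : finType)
  (to : action D T) (Z : {set gT}) : {set {set T}} :=
  orbit to Z @: [set: T].

(* Main.v *)
Require Import Defs.
From mathcomp Require Import all_boot all_fingroup all_solvable.
Open Scope group_scope.


Lemma astab1E (gT : finGroupType) (G : {group gT}) (T : finType) (to : action G T) x a :
  (a \in 'C[x | to]) = (a \in G) && (to x a == x).
Proof. by rewrite !inE sub1set inE. Qed.

Lemma setact_orbitZ (gT : finGroupType) (G Z : {group gT}) (T : finType)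
  (to : action G T) x g :
  Z <| G -> g \in G -> to^* (orbit to Z x) g = orbit to Z (to x g).
Proof.
move=> nZG Gg; have sZG := normal_sub nZG.
have nZg : g \in 'N(Z) := subsetP (normal_norm nZG) g Gg.
apply/setP=> y; apply/imsetP/imsetP.
- case=> u /imsetP[z Zz ->] ->; exists (z ^ g); first by rewrite memJ_norm.
  have Gz := subsetP sZG z Zz.
  by rewrite -actMin // -actMin ?groupJ // -conjgC.
- case=> z Zz ->; have Gz := subsetP sZG z Zz.
  exists (to x (z ^ g^-1)); first by apply: mem_orbit; rewrite memJ_norm ?groupV.
  by rewrite -actMin ?groupJ ?groupV // -actMin ?groupJ ?groupV // conjgCV.
Qed.

Lemma setact_orbitZ1 (gT : finGroupType) (G Z : {group gT}) (T : finType)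
  (to : action G T) x z :
  Z <| G -> z \in Z -> to^* (orbit to Z x) z = orbit to Z x.
Proof.
move=> nZG Zz; have sZG := normal_sub nZG.
by rewrite setact_orbitZ ?(subsetP sZG) // orbit_act_in.
Qed.

Lemma stab_transfer (gT : finGroupType) (G : {group gT}) (T1 T2 : finType)
  (to1 : action G T1) (to2 : action G T2) u v g1 g2 :
  'C_G[u | to1] = 'C_G[v | to2] -> g1 \in G -> g2 \in G ->
  to1 u g1 = to1 u g2 -> to2 v g1 = to2 v g2.
Proof.
move=> eqC G1 G2 e.
have : g1 * g2^-1 \in 'C_G[v | to2].
  rewrite -eqC.
  by rewrite inE astab1E groupM ?groupV //= actMin ?groupV // e -actMin ?groupV // mulgV act1 eqxx.
rewrite inE astab1E => /andP[_ /andP[_ /eqP h]].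
by rewrite -(mulgKV g2 g1) actMin ?groupM ?groupV // h.
Qed.

Lemma good_stab (gT : finGroupType) (Z E G : {group gT}) (T : finType)
  (to : action G T) x e :
  Z ><| E = G -> 'C_G[x | to] = 'C_Z[x | to] * 'C_E[x | to] -> e \in E ->
  (to x e == x) = (to^* (orbit to Z x) e == orbit to Z x).
Proof.
move=> sdG good Ee; have [nZG sEG defG nZE tiZE] := sdprod_context sdG.
have sZG := normal_sub nZG; have Ge := subsetP sEG e Ee.
rewrite setact_orbitZ //; apply/eqP/eqP=> [->//|].
move=> h; have : to x e \in orbit to Z x by rewrite -h orbit_refl.
case/orbitP=> z Zz hz; have Gz := subsetP sZG z Zz.
have : e * z^-1 \in 'C_G[x | to].
  by rewrite inE astab1E groupM ?groupV // actMin ?groupV // -hz -actMin ?groupV // mulgV act1 eqxx.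
rewrite good => /mulsgP[a b].
rewrite !inE => /andP[Za _] /andP[Eb /andP[_]]; rewrite sub1set inE => /eqP hb ee.
have Gb := subsetP sEG b Eb.
have c1 : e * b^-1 = a * z ^ b^-1.
  rewrite -(mulgKV z e) ee.
  by rewrite /conjg invgK !mulgA.
have : e * b^-1 \in Z :&: E.
  rewrite inE; apply/andP; split; last by rewrite groupM ?groupV.
  by rewrite c1 groupM // memJ_norm ?groupV // (subsetP nZE).
rewrite tiZE => /set1gP h1.
by rewrite -(mulgKV b e) h1 mul1g hb.
Qed.

Theorem lemma2p1 (gT : finGroupType) (Z E G : {group gT})
  (I J : finType) (toI : action G I) (toJ : action G J)
  (Jb : {set I} -> {set J}) :
  Z ><| E = G ->
  abelian Z ->
  (* Jb maps Z-orbits of I to Z-orbits of J *)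
  {in zorbits toI Z, forall O, Jb O \in zorbits toJ Z} ->
  (* Jb is E-equivariant *)
  {in zorbits toI Z, forall O, forall e, e \in E ->
      Jb (setact toI O e) = setact toJ (Jb O) e} ->
  (* (i) *)
  (forall x : I, exists2 x', x' \in orbit toI Z x &
      'C_G[x' | toI] = 'C_Z[x' | toI] * 'C_E[x' | toI]) ->
  (forall y : J, exists2 y', y' \in orbit toJ Z y &
      'C_G[y' | toJ] = 'C_Z[y' | toJ] * 'C_E[y' | toJ]) ->
  (* (ii) *)
  (forall (x : I) (y : J), y \in Jb (orbit toI Z x) ->
      'C_Z[x | toI] = 'C_Z[y | toJ]) ->
  (* (iii) Jb is a bijection between the sets of Z-orbits *)
  {in zorbits toI Z &, injective Jb} ->
  Jb @: zorbits toI Z = zorbits toJ Z ->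
  exists f : I -> J,
    [/\ bijective f,
        (forall (x : I) (g : gT), g \in G -> f (toI x g) = toJ (f x) g) &
        (forall x : I, f x \in Jb (orbit toI Z x))].
Proof.
move=> sdG _ JbO JbE goodI goodJ Cz Jinj Jsurj.
have [nZG sEG defG nZE tiZE] := sdprod_context sdG.
have sZG := normal_sub nZG.
have zoI : forall x, orbit toI Z x \in zorbits toI Z.
  by move=> x; apply: imset_f; rewrite inE.
have zoJ : forall y, orbit toJ Z y \in zorbits toJ Z.
  by move=> y; apply: imset_f; rewrite inE.
have JbOrb : forall x y, y \in Jb (orbit toI Z x) -> Jb (orbit toI Z x) = orbit toJ Z y.
  move=> x y; have /imsetP[w _ ->] := JbO _ (zoI x).
  by move=> yw; rewrite (elimT (orbit_in_eqP sZG) yw).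
have JbG : forall x g, g \in G ->
    Jb (orbit toI Z (toI x g)) = toJ^* (Jb (orbit toI Z x)) g.
  move=> x g Gg; have : g \in Z * E by rewrite defG.
  case/mulsgP=> z e Zz Ee ->.
  have Gz := subsetP sZG z Zz; have Ge := subsetP sEG e Ee.
  rewrite actMin // -setact_orbitZ // orbit_act_in // JbE ?zoI //.
  have /imsetP[w _ ->] := JbO _ (zoI x).
  by rewrite (actMin toJ^*) //= (@setact_orbitZ1 _ _ _ _ _ _ _ nZG Zz).
have Key : forall x y, 'C_G[x | toI] = 'C_Z[x | toI] * 'C_E[x | toI] ->
    'C_G[y | toJ] = 'C_Z[y | toJ] * 'C_E[y | toJ] ->
    y \in Jb (orbit toI Z x) -> 'C_G[x | toI] = 'C_G[y | toJ].
  move=> x y gx gy yJ; rewrite gx gy (Cz x y yJ); congr (_ * _).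
  apply/setP=> e; rewrite !in_setI; case Ee: (e \in E) => //=.
  rewrite (subsetP sEG e Ee) /= !inE !sub1set !inE.
  rewrite (@good_stab _ _ _ _ _ _ _ _ sdG gx Ee) (@good_stab _ _ _ _ _ _ _ _ sdG gy Ee) -(JbOrb x y yJ).
  rewrite -JbE ?zoI // (inj_in_eq Jinj) ?zoI // setact_orbitZ ?(subsetP sEG) ?zoI //.
pose goodIb x := 'C_G[x | toI] == 'C_Z[x | toI] * 'C_E[x | toI].
have rP : forall x, exists2 x', [pick x' in orbit toI G x | goodIb x'] = Some x'
    & (x' \in orbit toI G x) && goodIb x'.
  move=> x; case: pickP => [x' h|]; first by exists x'.
  case: (goodI x) => x' xZ gx' /(_ x').
  rewrite /goodIb gx' eqxx andbT.
  suff -> : x' \in orbit toI G x by [].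
  by case/orbitP: xZ => z Zz <-; apply: mem_orbit; apply: (subsetP sZG).
pose r x := odflt x [pick x' in orbit toI G x | goodIb x'].
have rO : forall x, r x \in orbit toI G x.
  by move=> x; rewrite /r; have [x' -> /andP[]] := rP x.
have rG : forall x, 'C_G[r x | toI] = 'C_Z[r x | toI] * 'C_E[r x | toI].
  by move=> x; rewrite /r; have [x' -> /andP[_ /eqP]] := rP x.
have rE : forall x1 x2, x2 \in orbit toI G x1 -> r x2 = r x1.
  move=> x1 x2 h; rewrite /r (elimT (orbit_in_eqP (subxx _)) h).
  by have [x' -> _] := rP x1.
pose gx x := odflt 1 [pick g in G | toI (r x) g == x].
have gP : forall x, gx x \in G /\ toI (r x) (gx x) = x.
  move=> x; rewrite /gx; case: pickP => [g /andP[Gg /eqP]//|].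
  have := rO x; rewrite orbit_in_sym ?subxx //; case/orbitP=> g Gg hg /(_ g).
  by rewrite Gg hg eqxx.
have noempty : forall x : I, exists w : J, true by move=> x; have /imsetP[w _ _] := JbO _ (zoI x); exists w.
case: (pickP (fun _ : J => true)) => [j0 _|noJ]; last first.
  have noI : I -> False by move=> x; have [w _] := noempty x; have := noJ w.
  have noJ' : J -> False by move=> w; have := noJ w.
  exists (fun x => False_rect J (noI x)); split.
  - by exists (fun w => False_rect I (noJ' w)) => x; [case: (noI x) | case: (noJ' x)].
  - by move=> x; case: (noI x).
  - by move=> x; case: (noI x).
pose goodJb y := 'C_G[y | toJ] == 'C_Z[y | toJ] * 'C_E[y | toJ].
pose yv x := odflt j0 [pick y in Jb (orbit toI Z (r x)) | goodJb y].
have yP : forall x, yv x \in Jb (orbit toI Z (r x)) /\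
    'C_G[yv x | toJ] = 'C_Z[yv x | toJ] * 'C_E[yv x | toJ].
  move=> x; rewrite /yv; case: pickP => [y /andP[h /eqP]//|].
  have /imsetP[w _ hw] := JbO _ (zoI (r x)).
  case: (goodJ w) => y' yw gy' /(_ y'); rewrite hw yw /goodJb gy' eqxx.
  by [].
have stab : forall x, 'C_G[r x | toI] = 'C_G[yv x | toJ].
  by move=> x; apply: Key; [apply: rG | apply: (yP x).2 | apply: (yP x).1].
have yE : forall x1 x2, x2 \in orbit toI G x1 -> yv x2 = yv x1.
  by move=> x1 x2 h; rewrite /yv (rE _ _ h).
pose f x := toJ (yv x) (gx x).
have fmem : forall x, f x \in Jb (orbit toI Z x).
  move=> x; have [Gg hg] := gP x.
  have -> : orbit toI Z x = orbit toI Z (toI (r x) (gx x)) by rewrite hg.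
  rewrite (JbG _ _ Gg); apply: mem_setact; exact: (yP x).1.
have feq : forall x h, h \in G -> f (toI x h) = toJ (f x) h.
  move=> x h Gh; rewrite /f.
  have hx : toI x h \in orbit toI G x by apply: mem_orbit.
  rewrite (yE _ _ hx) -actMin ?(gP x).1 //.
  apply: (@stab_transfer _ _ _ _ _ _ _ _ _ _ (stab x)); rewrite ?groupM ?(gP x).1 ?(gP _).1 //.
  by rewrite -{1}(rE _ _ hx) (gP _).2 actMin ?(gP x).1 // (gP x).2.
have finj : injective f.
  move=> a b fab.
  have ha := JbOrb _ _ (fmem a); have hb := JbOrb _ _ (fmem b).
  have eab : orbit toI Z a = orbit toI Z b.
    by apply: Jinj; rewrite ?zoI // ha hb fab.
  have bGa : b \in orbit toI G a.
    have : b \in orbit toI Z a by rewrite eab orbit_refl.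
    by case/orbitP=> z Zz <-; apply: mem_orbit; apply: (subsetP sZG).
  have rab := rE a b bGa; have yab := yE a b bGa.
  move: fab; rewrite /f yab => fab.
  rewrite -(gP a).2 -(gP b).2 rab.
  apply: (@stab_transfer _ _ _ _ _ _ _ _ _ _ (esym (stab a))); rewrite ?(gP _).1 //.
have fsurj : forall w, exists a, f a = w.
  move=> w; have : orbit toJ Z w \in Jb @: zorbits toI Z by rewrite Jsurj zoJ.
  case/imsetP=> O /imsetP[a _ ->] hw.
  have : f a \in orbit toJ Z w by rewrite hw fmem.
  case/orbitP=> z Zz hz; have Gz := subsetP sZG z Zz.
  exists (toI a z^-1); by rewrite feq ?groupV // -hz actKin.
exists f; split => //.
apply: inj_card_bij finj _.
apply: leq_trans (leq_image_card f I).
apply/subset_leq_card/subsetP => w _; have [a <-] := fsurj w; exact: image_f.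
Qed.
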